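(* Let $\phi_1,\dots,\phi_N$ be random features drawn from a distribution with mean $\mu_\phi$, and set $\Delta_\phi := \max_{\phi} \|\phi-\mu_\phi\|_2$, the maximum taken over the distribution's support. Let $a_1,\dots,a_N$ be real parameters with $a_i \in [\alpha,\beta]$ for all $i$, where $0<\alpha<\beta$ (any sign having been absorbed into $\phi_i$). Consider the network $\Phi = \sum_{i=1}^N a_i \phi_i$ and write $\xi := \beta-\alpha$. Suppose $\|\phi_i\|_2 \le \delta$ for every $i$. Fix $P \subseteq \{1,\dots,N\}$ with $|P| = M < N$ and define the pruned network $\Phi_M := \sum_{i \notin P} a_i \phi_i$ and the renormalized pruned network $\widehat\Phi_M := \frac{N}{N-M}\Phi_M$. Then $$\|\Phi - \widehat\Phi_M\|_2 \le 2\beta\,\Delta_\phi\, M + \xi(\beta+\alpha)\,\delta\, M/\alpha.$$ Consequently $\|\Phi - \widehat\Phi_M\|_2 = O(\Delta_\phi + \xi)$ as $\Delta_\phi + \xi \to 0$, so the error tends to $0$ as the random variables $\phi_i$ and $a_i$ concentrate.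
   Context: The network is modeled as a linear combination of features: for an input $x$, $\Phi(x) = \sum_i a_i \phi_i(x)$, where $\phi_i$ is a feature (embedding) and $a_i$ is a parameter. All norms are $2$-norms. ''Pruning'' sets the $M$ parameters indexed by $P$ to zero. Those indices need not be the ones with the smallest $a_i$. Renormalization then rescales the remaining network by $N/(N-M)$, where $N$ is the number of nonzero parameters before pruning. *)

(* Defs.v *)
(* Features live in R^d, represented as row vectors 'rV[R]_d
   over a real closed field R (so that Num.sqrt is available). *)
From HB Require Import structures.
From mathcomp Require Import all_boot all_order all_algebra.
Set Implicit Arguments. Unset Strict Implicit. Unset Printing Implicit Defensive.
Import Order.TTheory GRing.Theory Num.Theory.
Local Open Scope ring_scope.

Definition norm2 (R : rcfType) (d : nat) (v : 'rV[R]_d) : R :=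
  Num.sqrt (\sum_(j < d) v ord0 j ^+ 2).

Definition network (R : rcfType) (d N : nat) (a : 'I_N -> R)
  (phi : 'I_N -> 'rV[R]_d) : 'rV[R]_d :=
  \sum_(i < N) a i *: phi i.

Definition pruned (R : rcfType) (d N : nat) (a : 'I_N -> R)
  (phi : 'I_N -> 'rV[R]_d) (P : {set 'I_N}) : 'rV[R]_d :=
  \sum_(i < N | i \notin P) a i *: phi i.

Definition renormalized (R : rcfType) (d N : nat) (a : 'I_N -> R)
  (phi : 'I_N -> 'rV[R]_d) (P : {set 'I_N}) : 'rV[R]_d :=
  (N%:R / (N - #|P|)%:R) *: pruned a phi P.

(* Main.v *)
Require Import Defs.
From HB Require Import structures.
From mathcomp Require Import all_boot all_order all_algebra.
From mathcomp Require Import ring lra.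
Import Order.TTheory GRing.Theory Num.Theory.
Local Open Scope ring_scope.

Section Norms.
Context {R : rcfType} {d : nat}.
Implicit Types (u v : 'rV[R]_d).

Definition sq u := \sum_(j < d) u ord0 j ^+ 2.
Definition dotp u v := \sum_(j < d) u ord0 j * v ord0 j.

Lemma sq_ge0 u : 0 <= sq u.
Proof. by apply: sumr_ge0 => j _; rewrite sqr_ge0. Qed.

Lemma norm2E u : norm2 u = Num.sqrt (sq u).
Proof. by []. Qed.

Lemma norm2_ge0 u : 0 <= norm2 u.
Proof. exact: sqrtr_ge0. Qed.

Lemma norm2_sq u : norm2 u ^+ 2 = sq u.
Proof. by rewrite norm2E sqr_sqrtr // sq_ge0. Qed.

Lemma norm2Z k u : norm2 (k *: u) = `|k| * norm2 u.
Proof.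
rewrite !norm2E /sq.
under eq_bigr do rewrite mxE exprMn.
by rewrite -mulr_sumr sqrtrM ?sqr_ge0 // sqrtr_sqr.
Qed.

Lemma norm2N u : norm2 (- u) = norm2 u.
Proof. by rewrite -scaleN1r norm2Z normrN normr1 mul1r. Qed.

Lemma norm2_0_dot u v : norm2 u = 0 -> dotp u v = 0.
Proof.
move=> /eqP; rewrite norm2E sqrtr_eq0 => h.
have h0 : sq u = 0 by apply/eqP; rewrite eq_le h sq_ge0.
rewrite /dotp big1 // => j _.
have /eqP : u ord0 j ^+ 2 = 0.
  by apply: (psumr_eq0P (P := predT) _ h0) => // i _; rewrite sqr_ge0.
by rewrite sqrf_eq0 => /eqP ->; rewrite mul0r.
Qed.

Lemma cs u v : dotp u v <= norm2 u * norm2 v.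
Proof.
have [pu|pu] := eqVneq (norm2 u) 0.
  by rewrite norm2_0_dot // pu mul0r.
have [qv|qv] := eqVneq (norm2 v) 0.
  rewrite /dotp; under eq_bigr do rewrite mulrC.
  by rewrite -/(dotp v u) norm2_0_dot // qv mulr0.
set p := norm2 u; set q := norm2 v.
have pp : 0 < p by rewrite lt_def pu norm2_ge0.
have qp : 0 < q by rewrite lt_def qv norm2_ge0.
have H : 0 <= \sum_(j < d) (q * u ord0 j - p * v ord0 j) ^+ 2
  by apply: sumr_ge0 => j _; rewrite sqr_ge0.
have E : \sum_(j < d) (q * u ord0 j - p * v ord0 j) ^+ 2
   = q ^+ 2 * sq u - 2 * p * q * dotp u v + p ^+ 2 * sq v.
  rewrite /sq /dotp !mulr_sumr -sumrB -big_split /=.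
  by apply: eq_bigr => j _; ring.
rewrite E -!norm2_sq -/p -/q in H.
have H2 : 0 <= (2 * p * q) * (p * q - dotp u v) by lra.
by rewrite pmulr_rge0 ?subr_ge0 in H2; rewrite ?mulr_gt0.
Qed.

Lemma norm2D u v : norm2 (u + v) <= norm2 u + norm2 v.
Proof.
have h0 : 0 <= norm2 u + norm2 v by rewrite addr_ge0 ?norm2_ge0.
rewrite -[X in _ <= X]ger0_norm // -sqrtr_sqr norm2E ler_sqrt ?sqr_ge0 //.
have E : sq (u + v) = sq u + 2 * dotp u v + sq v.
  rewrite /sq /dotp mulr_sumr -!big_split /=.
  by apply: eq_bigr => j _; rewrite !mxE; ring.
rewrite E -!norm2_sq.
have := cs u v; lra.
Qed.

Lemma norm2B u v : norm2 (u - v) <= norm2 u + norm2 v.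
Proof. by rewrite -(norm2N v) norm2D. Qed.

Lemma norm2_sum (I : finType) (P : pred I) (F : I -> 'rV[R]_d) :
  norm2 (\sum_(i | P i) F i) <= \sum_(i | P i) norm2 (F i).
Proof.
apply: (big_ind2 (fun x y => norm2 x <= y)) => //.
- by rewrite -(scale0r (0 : 'rV[R]_d)) norm2Z normr0 mul0r.
- move=> x1 x2 y1 y2 h1 h2; apply: le_trans (norm2D _ _) _; exact: lerD.
Qed.

End Norms.

Lemma keyL (R : rcfType) (d N : nat) (phi : 'I_N -> 'rV[R]_d) (mu : 'rV[R]_d)
  (Delta delta : R) (p q : 'I_N -> R) :
  (forall i, norm2 (phi i - mu) <= Delta) -> (forall i, norm2 (phi i) <= delta) ->
  (forall i, 0 <= p i) -> (forall i, 0 <= q i) ->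
  \sum_i q i <= \sum_i p i ->
  norm2 (\sum_i p i *: phi i - \sum_i q i *: phi i)
    <= 2 * (\sum_i q i) * Delta + (\sum_i p i - \sum_i q i) * delta.
Proof.
move=> hD hd hp hq.
set A := \sum_i p i; set B := \sum_i q i.
set X := \sum_i p i *: phi i; set Y := \sum_i q i *: phi i.
move=> hBA.
have B0 : 0 <= B by apply: sumr_ge0.
have A0 : 0 <= A by apply: sumr_ge0.
set s := B / A.
have sA : s * A = B.
  have [A0'|Anz] := eqVneq A 0.
    rewrite A0' mulr0; lra.
  by rewrite /s divfK.
have s0 : 0 <= s by rewrite /s divr_ge0.
have s1 : s <= 1.
  have [A0'|Anz] := eqVneq A 0; first by rewrite /s A0' invr0 mulr0 ler01.
  by rewrite /s ler_pdivrMr ?mul1r // lt_def Anz A0.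
have E : X - Y = \sum_i (s * p i - q i) *: (phi i - mu) + (1 - s) *: X.
  have E1 : \sum_i (s * p i - q i) *: (phi i - mu)
           = s *: X - Y - (s * A - B) *: mu.
    rewrite /X /Y /A /B scaler_sumr.
    rewrite mulr_sumr -!sumrB scaler_suml -sumrB.
    apply: eq_bigr => i _.
    by rewrite scalerBr !scalerBl scalerA.
  rewrite E1 sA subrr scale0r subr0 scalerBl scale1r.
  by rewrite [RHS]addrC [RHS]addrA subrK.
rewrite E.
apply: (le_trans (norm2D _ _)).
apply: lerD.
  apply: (le_trans (norm2_sum _ _ _)).
  have -> : 2 * B * Delta = \sum_i (s * p i + q i) * Delta.
    by rewrite -mulr_suml big_split /= -mulr_sumr -/A -/B sA mulr_natl mulr2n.
  apply: ler_sum => i _.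
  rewrite norm2Z.
  have Dg : 0 <= Delta by apply: le_trans (hD i); apply: norm2_ge0.
  apply: le_trans (_ : `|s * p i - q i| * Delta <= _).
    by apply: ler_wpM2l => //.
  apply: ler_wpM2r => //.
  apply: (le_trans (ler_normB _ _)).
  by rewrite (ger0_norm (mulr_ge0 s0 (hp i))) (ger0_norm (hq i)).
rewrite norm2Z ger0_norm ?subr_ge0 //.
have -> : (A - B) * delta = (1 - s) * (A * delta) by rewrite -sA; ring.
apply: ler_wpM2l; first by rewrite subr_ge0.
apply: (le_trans (norm2_sum _ _ _)).
rewrite /A mulr_suml; apply: ler_sum => i _.
by rewrite norm2Z ger0_norm // ler_wpM2l.
Qed.

Lemma finnum (R : rcfType) (A B Mr al be De de : R) :
  0 < al -> al < be -> 0 <= De -> 0 <= de -> 0 <= Mr ->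
  B <= Mr * be -> Mr * al <= B -> A <= Mr * be -> Mr * al <= A ->
  2 * B * De + (A - B) * de <= 2 * be * De * Mr + (be - al) * (be + al) * de * Mr / al.
Proof.
move=> ha hab hD hd hM hB1 hB2 hA1 hA2.
have h1 : 2 * B * De <= 2 * be * De * Mr by nra.
have h2 : (A - B) * de <= Mr * (be - al) * de by nra.
have h0 : 0 <= Mr * (be - al) * de by rewrite !mulr_ge0 // subr_ge0 ltW.
have h3 : Mr * (be - al) * de <= (be - al) * (be + al) * de * Mr / al.
  rewrite ler_pdivlMr //.
  have -> : (be - al) * (be + al) * de * Mr = (Mr * (be - al) * de) * (be + al) by ring.
  apply: ler_wpM2l => //; lra.
lra.
Qed.

Theorem theorem1 (R : rcfType) (d N M : nat)
  (S : pred 'rV[R]_d) (mu : 'rV[R]_d) (Delta : R)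
  (hDelta : forall x, x \in S -> norm2 (x - mu) <= Delta)
  (phi : 'I_N -> 'rV[R]_d) (hphiS : forall i, phi i \in S)
  (a : 'I_N -> R) (alpha beta delta : R)
  (halpha : 0 < alpha) (hab : alpha < beta)
  (ha : forall i, alpha <= a i <= beta)
  (hdelta : forall i, norm2 (phi i) <= delta)
  (P : {set 'I_N}) (hPM : #|P| = M) (hMN : (M < N)%N) :
  norm2 (network a phi - renormalized a phi P)
    <= 2 * beta * Delta * M%:R
       + (beta - alpha) * (beta + alpha) * delta * M%:R / alpha.
Proof.
pose i0 : 'I_N := Ordinal (leq_ltn_trans (leq0n M) hMN).
have hD : forall i, norm2 (phi i - mu) <= Delta by move=> i; apply: hDelta.
have D0 : 0 <= Delta := le_trans (norm2_ge0 _) (hD i0).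
have d0 : 0 <= delta := le_trans (norm2_ge0 _) (hdelta i0).
have cP : #|~: P| = (N - M)%N.
  by have h := cardsC P; rewrite card_ord hPM in h; rewrite -[in RHS]h addKn.
have nm : (N - M)%:R != 0 :> R by rewrite pnatr_eq0 subn_eq0 -ltnNge.
set k : R := M%:R / (N - M)%:R.
have k0 : 0 <= k by rewrite /k divr_ge0 ?ler0n.
have kNM : k * (N - M)%:R = M%:R by rewrite /k divfK.
pose p i := if i \in P then a i else 0.
pose q i := if i \in P then 0 else k * a i.
have hp : forall i, 0 <= p i.
  by move=> i; rewrite /p; case: ifP => // _; apply: le_trans (ltW halpha) _; case/andP: (ha i).
have hq : forall i, 0 <= q i.
  move=> i; rewrite /q; case: ifP => // _; apply: mulr_ge0 => //.
  by apply: le_trans (ltW halpha) _; case/andP: (ha i).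
have EX : \sum_i p i *: phi i = \sum_(i in P) a i *: phi i.
  by rewrite [RHS]big_mkcond; apply: eq_bigr => i _; rewrite /p; case: ifP => _; rewrite ?scale0r.
have EY : \sum_i q i *: phi i = k *: \sum_(i in ~: P) a i *: phi i.
  rewrite scaler_sumr [RHS]big_mkcond; apply: eq_bigr => i _; rewrite /q in_setC.
  by case: ifP => _ /=; rewrite ?scale0r ?scalerA.
have EA : \sum_i p i = \sum_(i in P) a i.
  by rewrite [RHS]big_mkcond; apply: eq_bigr => i _; rewrite /p; case: ifP.
have EB : \sum_i q i = k * \sum_(i in ~: P) a i.
  rewrite mulr_sumr [RHS]big_mkcond; apply: eq_bigr => i _; rewrite /q in_setC.
  by case: ifP => _ /=; rewrite ?mulr0.
have Ediff : network a phi - renormalized a phi P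
    = \sum_i p i *: phi i - \sum_i q i *: phi i.
  rewrite EX EY /network /renormalized /pruned.
  rewrite (bigID (mem P)) /=.
  have -> : \sum_(i < N | i \notin P) a i *: phi i = \sum_(i in ~: P) a i *: phi i.
    by apply: eq_bigl => i; rewrite in_setC.
  have -> : N%:R / (N - #|P|)%:R = 1 + k :> R.
    rewrite hPM; apply: (mulIf nm); rewrite mulrDl divfK // mul1r kNM -natrD subnK //.
    exact: ltnW.
  by rewrite scalerDl scale1r opprD addrA addrK.
have A1 : \sum_(i in P) a i <= M%:R * beta.
  have : \sum_(i in P) a i <= \sum_(i in P) beta.
    by apply: ler_sum => i _; case/andP: (ha i).
  by rewrite sumr_const hPM mulr_natl.
have A2 : M%:R * alpha <= \sum_(i in P) a i.
  have : \sum_(i in P) alpha <= \sum_(i in P) a i.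
    by apply: ler_sum => i _; case/andP: (ha i).
  by rewrite sumr_const hPM mulr_natl.
have B1 : k * \sum_(i in ~: P) a i <= M%:R * beta.
  have : \sum_(i in ~: P) a i <= \sum_(i in ~: P) beta.
    by apply: ler_sum => i _; case/andP: (ha i).
  rewrite sumr_const cP -(mulr_natl beta) => h.
  by rewrite -kNM -mulrA; apply: ler_wpM2l.
have B2 : M%:R * alpha <= k * \sum_(i in ~: P) a i.
  have : \sum_(i in ~: P) alpha <= \sum_(i in ~: P) a i.
    by apply: ler_sum => i _; case/andP: (ha i).
  rewrite sumr_const cP -(mulr_natl alpha) => h.
  by rewrite -kNM -mulrA; apply: ler_wpM2l.
rewrite Ediff -EA -EB in A1 A2 B1 B2 *.
have hM : 0 <= M%:R :> R by rewrite ler0n.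
have [hBA|hAB] := leP (\sum_i q i) (\sum_i p i).
  apply: (le_trans (@keyL _ _ _ _ _ _ _ _ _ hD hdelta hp hq hBA)).
  exact: finnum.
rewrite -opprB norm2N.
apply: (le_trans (@keyL _ _ _ _ _ _ _ _ _ hD hdelta hq hp (ltW hAB))).
exact: finnum.
Qed.
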